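(* Let $\mu$ be an admissible even Borel probability measure on $\mathbb{R}$. Then $\lim_{x\uparrow x^{\ast}}\Lambda_\mu^{\ast}(x)=+\infty$.
   Context: Let $X$ have distribution $\mu$. Write $x^{\ast}=\sup\{x\in\mathbb{R}:\mu([x,\infty))>0\}$ (possibly $+\infty$), $\Lambda_\mu(t)=\ln\int e^{tx}\,d\mu(x)$ and $\Lambda_\mu^{\ast}(x)=\sup_{t\in\mathbb{R}}\{tx-\Lambda_\mu(t)\}$. The measure $\mu$ is admissible if: $\mathrm{Var}(X)>0$; there is $r>0$ with $\mathbb{E}e^{tX}<\infty$ for $t\in(-r,r)$; if $x^{\ast}<\infty$ then $\mu(\{x^{\ast}\})=0$; and one of: (1) $x^{\ast}<\infty$, (2) $x^{\ast}=+\infty$ and $\{\Lambda_\mu<\infty\}=\mathbb{R}$, (3) $x^{\ast}=+\infty$, $\{\Lambda_\mu<\infty\}$ bounded and $\mu$ log-concave. *)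

(* Defs.v *)
From HB Require Import structures.
From mathcomp Require Import all_boot all_order all_algebra.
From mathcomp Require Import all_classical all_reals all_analysis.
Set Implicit Arguments. Unset Strict Implicit. Unset Printing Implicit Defensive.
Import Order.TTheory GRing.Theory Num.Theory.
Import numFieldNormedType.Exports.
Local Open Scope classical_set_scope.
Local Open Scope ring_scope.

(* Borel probability measures on R: [probability R R] for the canonical
   (Borel) measurable structure on the real line. X is the identity. *)

Section defs.
Variable R : realType.
Variable mu : probability R R.

Definition mgf (t : R) : \bar R := mmt_gen_fun mu id t.

Definition Lambda (t : R) : \bar R :=
  match mgf t with
  | x%:E => (ln x)%:E
  | +oo%E => +oo%E
  | -oo%E => -oo%E
  end.

Definition Lambda_star (x : R) : \bar R :=
  ereal_sup [set ((t * x)%:E - Lambda t)%E | t in [set: R]].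

Definition xstar : \bar R :=
  ereal_sup [set x%:E | x in [set x : R | (0 < mu [set` `[x, +oo[])%E]].

Definition even_measure : Prop :=
  forall A : set R, measurable A -> mu [set - x | x in A] = mu A.

Definition log_concave_measure : Prop :=
  forall (A B : set R) (l : R), measurable A -> measurable B ->
    0 < l < 1 ->
    measurable [set l * a + (1 - l) * b | a in A & b in B] ->
    (((fine (mu A) `^ l) * (fine (mu B) `^ (1 - l)))%:E <=
      mu [set (l * a + (1 - l) * b)%R | a in A & b in B])%E.

Definition admissible : Prop :=
  [/\ (0 < variance mu id)%E,
      (exists2 r : R, 0 < r & forall t : R, - r < t < r -> (mgf t < +oo)%E),
      (forall x : R, xstar = x%:E -> mu [set x] = 0%E) &
      [\/ (exists x : R, xstar = x%:E),
          xstar = +oo%E /\ (forall t : R, (Lambda t < +oo)%E) |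
          [/\ xstar = +oo%E,
              (exists M : R, forall t : R, (Lambda t < +oo)%E -> `|t| <= M) &
              log_concave_measure]]].

End defs.

(* Main.v *)
Require Import Defs.
From HB Require Import structures.
From mathcomp Require Import all_boot all_order all_algebra.
From mathcomp Require Import all_classical all_reals all_analysis.
From mathcomp Require Import measurable_realfun.
From mathcomp Require Import lra.
Import Order.TTheory GRing.Theory Num.Theory.
Import numFieldNormedType.Exports.
Local Open Scope classical_set_scope.
Local Open Scope ring_scope.

Section helpers.
Context (R : realType) (mu : probability R R).
Local Open Scope ereal_scope.

Lemma mgfE t : mgf mu t = \int[mu]_x (expR (x * t))%:E.
Proof. by rewrite /mgf /mmt_gen_fun unlock. Qed.

Lemma meas_exp t : measurable_fun [set: R] (fun x => (expR (x * t))%:E : \bar R).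
Proof.
apply/measurable_EFinP; apply: measurableT_comp; first exact: measurable_expR.
by apply: measurable_funM => //; exact: measurable_id.
Qed.

Lemma mgf_ge0 t : 0 <= mgf mu t.
Proof. by rewrite mgfE; apply: integral_ge0 => x _; rewrite lee_fin expR_ge0. Qed.

Lemma Lstar_ge t x : (t * x)%:E - Lambda mu t <= Lambda_star mu x.
Proof. by apply: ereal_sup_ubound; exists t. Qed.

Lemma int_cst_indic (c : R) (A : set R) : measurable A -> (0 <= c)%R ->
  \int[mu]_x (c * \1_A x)%:E = c%:E * mu A.
Proof.
move=> mA c0.
rewrite (@integralZl_indic _ _ _ mu setT measurableT (fun _ => A) c) //; last by move=> c0'; move: (lt_le_trans c0' c0); rewrite ltxx.
by rewrite integral_indic // setIT.
Qed.

Lemma exists_pos : exists z : R, 0 < mu [set` `[z, +oo[].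
Proof.
apply: contrapT => /forallNP H.
have H0 n : mu [set` `[(- (n%:R : R))%R, +oo[] = 0.
  apply/eqP; rewrite eq_le measure_ge0 andbT leNgt; apply/negP; exact: H.
have : mu.-negligible (\bigcup_n [set` `[(- (n%:R : R))%R, +oo[]).
  apply: negligible_bigcup => n; apply/negligibleP => //; exact: H0.
have hT : [set: R] `<=` \bigcup_n [set` `[(- (n%:R : R))%R, +oo[].
  move=> x _; exists (Num.truncn (- x)).+1 => //=.
  rewrite in_itv /= andbT lerNl; apply: ltW; exact: truncnS_gt.
case=> N [mN muN sN].
have : mu [set: R] <= mu N.
  by apply: le_measure; rewrite ?inE //; apply: subset_trans sN.
by rewrite probability_setT muN lee_fin ler10.
Qed.


Lemma mgf_bound (x0 y t : R) : (0 <= t)%R -> mu.-negligible [set x | (x0 < x)%R] ->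
  mgf mu t <= (expR (y * t) + expR (x0 * t) * fine (mu [set` `[y, +oo[]))%:E.
Proof.
move=> t0 hN.
set A := [set` `[y, +oo[].
have mA : measurable A by exact: measurable_itv.
have finA : mu A = (fine (mu A))%:E.
  rewrite fineK // ge0_fin_numE ?measure_ge0 //.
  by apply: le_lt_trans (probability_le1 _ mA) _; exact: ltry.
have g10 : forall x : R, [set: R] x -> 0 <= ((expR (y * t))%:E : \bar R).
  by move=> x _; rewrite lee_fin expR_ge0.
have g20 : forall x : R, [set: R] x -> 0 <= (expR (x0 * t) * \1_A x)%:E.
  by move=> x _; rewrite lee_fin mulr_ge0 ?expR_ge0.
have mg1 : measurable_fun setT (fun x : R => ((expR (y * t))%:E : \bar R)).
  exact: measurable_cst.
have mg2 : measurable_fun setT (fun x : R => (expR (x0 * t) * \1_A x)%:E).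
  apply/measurable_EFinP; apply: measurable_funM => //; exact: measurable_indic.
rewrite mgfE.
apply: (@le_trans _ _ (\int[mu]_x ((expR (y * t))%:E + (expR (x0 * t) * \1_A x)%:E))).
  apply: ae_ge0_le_integral => //.
  - exact: meas_exp.
  - by move=> x _; rewrite adde_ge0 // ?(g10 x I) ?(g20 x I).
  - exact: emeasurable_funD.
  apply: negligibleS hN => x /= hx; rewrite ltNge; apply/negP => hxx; apply: hx => _.
  have [hyx|hyx] := lerP y x.
    rewrite indicE mem_set; last by rewrite /A /= in_itv /= hyx.
    rewrite mulr1; apply: le_trans (_ : (expR (x0 * t))%:E <= _).
      by rewrite lee_fin ler_expR ler_wpM2r.
    by rewrite leeDr // lee_fin expR_ge0.
  apply: le_trans (_ : (expR (y * t))%:E <= _).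
    by rewrite lee_fin ler_expR ler_wpM2r // ltW.
  by rewrite leeDl // lee_fin mulr_ge0 ?expR_ge0.
rewrite ge0_integralD //.
have -> : \int[mu]_x ((expR (y * t))%:E : \bar R) = (expR (y * t))%:E.
  rewrite (integral_cst mu measurableT (expR (y * t))%:E) -[RHS]mule1; congr (_ * _); exact: probability_setT.
rewrite int_cst_indic ?expR_ge0 // finA.
by rewrite -EFinM -EFinD.
Qed.

Lemma mgf_gt0 t : (0 <= t)%R -> 0 < mgf mu t.
Proof.
move=> t0; have [z hz] := exists_pos.
set A := [set` `[z, +oo[].
have mA : measurable A by exact: measurable_itv.
rewrite mgfE.
apply: (@lt_le_trans _ _ ((expR (z * t))%:E * mu A)).
  by apply: mule_gt0 => //; rewrite lte_fin expR_gt0.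
rewrite -int_cst_indic ?expR_ge0 //.
apply: ge0_le_integral => //.
- apply/measurable_EFinP; apply: measurable_funM => //; exact: measurable_indic.
- exact: meas_exp.
move=> x _; have [hzx|hzx] := lerP z x.
  rewrite indicE mem_set; last by rewrite /A /= in_itv /= hzx.
  by rewrite mulr1 lee_fin ler_expR ler_wpM2r.
rewrite indicE memNset ?mulr0 ?lee_fin ?expR_ge0 //.
  by rewrite /A /= in_itv /= andbT; apply/negP; rewrite -ltNge.
Qed.


Lemma small_inv (e : R) : (0 < e)%R -> exists n : nat, ((n.+1%:R)^-1 < e)%R.
Proof.
move=> e0; exists (Num.truncn e^-1).
rewrite invf_plt ?posrE ?ltr0Sn //; exact: truncnS_gt.
Qed.

Lemma neg_right (x0 : R) : xstar mu = x0%:E -> mu.-negligible [set x | (x0 < x)%R].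
Proof.
move=> hx.
apply: (@negligibleS _ _ _ _ (\bigcup_n [set` `[(x0 + (n.+1%:R)^-1)%R, +oo[])).
  move=> x /= hx0; have hx1 : (0 < x - x0)%R by rewrite subr_gt0.
  have [n hn] := small_inv _ hx1.
  exists n => //=; rewrite in_itv /= andbT -lerBrDl; exact: ltW.
apply: negligible_bigcup => n; apply/negligibleP; first exact: measurable_itv.
apply/eqP; rewrite eq_le measure_ge0 andbT leNgt; apply/negP => hpos.
have : (x0 + (n.+1%:R)^-1)%:E <= xstar mu by apply: ereal_sup_ubound; exists (x0 + (n.+1%:R)^-1)%R.
have : (0 < (n.+1%:R : R)^-1)%R by rewrite invr_gt0 ltr0Sn.
rewrite hx lee_fin; move: ((n.+1%:R : R)^-1)%R => k; lra.
Qed.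

Lemma mu_atx0 (x0 : R) : xstar mu = x0%:E -> mu [set x0] = 0 -> mu [set` `[x0, +oo[] = 0.
Proof.
move=> hx h1.
have : mu.-negligible ([set x0] `|` [set x | (x0 < x)%R]).
  apply: negligibleU; last exact: neg_right.
  by apply/negligibleP => //; exact: measurable_set1.
case=> N [mN muN sN].
apply/eqP; rewrite eq_le measure_ge0 andbT -muN.
have hsub : [set` `[x0, +oo[] `<=` N.
  move=> x /=; rewrite in_itv /= andbT => hx0; apply: sN.
  by rewrite le_eqVlt in hx0; case/orP: hx0 => [/eqP->|h]; [left|right].
by apply: le_measure hsub; rewrite inE //; exact: measurable_itv.
Qed.

Lemma p_small (x0 eps : R) : mu [set` `[x0, +oo[] = 0 -> (0 < eps)%R ->
  exists n : nat, (fine (mu [set` `[(x0 - (n.+1%:R)^-1)%R, +oo[]) < eps)%R.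
Proof.
move=> h0 e0.
pose F := fun n : nat => [set` `[(x0 - (n.+1%:R)^-1)%R, +oo[].
have mF : forall n, measurable (F n) by move=> n; exact: measurable_itv.
have capE : \bigcap_n F n = [set` `[x0, +oo[].
  apply/seteqP; split => x /=.
    move=> hx; rewrite in_itv /= andbT; rewrite leNgt; apply/negP => hlt.
    have hx1 : (0 < x0 - x)%R by rewrite subr_gt0.
    have [n hn] := small_inv _ hx1.
    have := hx n I; rewrite /F /= in_itv /= andbT.
    move: hn; move: ((n.+1%:R : R)^-1)%R => k; lra.
  rewrite in_itv /= andbT => hx n _; rewrite /F /= in_itv /= andbT.
  have : (0 < (n.+1%:R : R)^-1)%R by rewrite invr_gt0 ltr0Sn.
  move: hx; move: ((n.+1%:R : R)^-1)%R => k; lra.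
have cv := @nonincreasing_cvg_mu _ _ _ mu F.
have : (mu \o F) x @[x --> \oo] --> mu (\bigcap_n F n).
  apply: cv => //.
  - by apply: le_lt_trans (probability_le1 _ (mF 0%N)) _; exact: ltry.
  - by apply: bigcapT_measurable.
  - move=> m n mn; rewrite subsetEset => x; rewrite /F /= !in_itv /= !andbT.
    suff : ((n.+1%:R : R)^-1 <= (m.+1%:R)^-1)%R.
      by move: ((n.+1%:R : R)^-1)%R ((m.+1%:R : R)^-1)%R => a b; lra.
    by rewrite lef_pV2 ?posrE ?ltr0Sn // ler_nat ltnS.
rewrite capE h0 => /fine_cvgP [_ /cvgr_lt /(_ eps e0)].
case=> N _ HN; exists N; exact: HN N (leqnn N).
Qed.

End helpers.

Theorem corollary2p5 (R : realType) (mu : probability R R) :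
  even_measure mu -> admissible mu ->
  match xstar mu with
  | x0%:E => Lambda_star mu x @[x --> x0^'-] --> +oo%E
  | +oo%E => Lambda_star mu x @[x --> +oo] --> +oo%E
  | -oo%E => False
  end.
Proof.
move=> ev [_ [r r0 hr] hat hcase].
have [z hz] := @exists_pos _ mu.
have xge : (z%:E <= xstar mu)%E by apply: ereal_sup_ubound; exists z.
case E: (xstar mu) => [x0| |]; last by rewrite E in xge.
- have h0 := @mu_atx0 _ mu x0 E (hat x0 E).
  have hN := @neg_right _ mu x0 E.
  apply/cvgeyPge => A.
  pose M := `|A|.
  have M0 : 0 <= M := normr_ge0 A.
  have AM : A <= M := ler_norm A.
  pose eps := expR (- (M + 1)) / 2.
  have e0 : 0 < eps by rewrite divr_gt0 ?expR_gt0.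
  have [n hn] := @p_small _ mu _ _ h0 e0.
  pose d := (n.+1%:R : R)^-1.
  have d0 : 0 < d by rewrite invr_gt0 ltr0Sn.
  pose y := x0 - d.
  pose p := fine (mu [set` `[y, +oo[]).
  have p0 : 0 <= p by apply: fine_ge0; apply: measure_ge0.
  have hp : p < eps by exact: hn.
  pose t := 2 * (M + 1) / d.
  have t0 : 0 < t by rewrite divr_gt0 // mulr_gt0 //; lra.
  have td : t * d = 2 * (M + 1) by rewrite /t divfK // gt_eqF.
  have m0 := @mgf_gt0 _ mu t (ltW t0).
  have mb := @mgf_bound _ mu x0 y t (ltW t0) hN.
  pose m := fine (mgf mu t).
  have mE : mgf mu t = m%:E.
    rewrite /m fineK // ge0_fin_numE ?(ltW m0) //.
    by apply: le_lt_trans mb _; exact: ltry.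
  have mpos : 0 < m by rewrite -lte_fin -mE.
  have LE : Lambda mu t = (ln m)%:E by rewrite /Lambda mE.
  have e1 : expR (-1) * 2 <= 1 :> R.
    have h1 : expR (-1) * expR 1 = 1 :> R by rewrite -expRD addNr expR0.
    have h2 : 1 + 1 <= expR 1 :> R := expR_ge1Dx 1.
    have h3 : 0 < expR (-1) :> R := expR_gt0 _.
    nra.
  have hmin : 0 < Num.min (d / 2) t^-1.
    by rewrite lt_min invr_gt0 t0 andbT divr_gt0.
  near=> x.
  have hx2 : x0 - x < Num.min (d / 2) t^-1 by near: x; exact: nbhs_left_ltBl.
  move: hx2; rewrite lt_min => /andP [hx2 hx3].
  apply: le_trans (@Lstar_ge _ mu t x).
  rewrite LE -EFinB lee_fin.
  suff : ln m <= t * x - M by lra.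
  have a1 : t * (x0 - x) <= t * (d / 2) by rewrite ler_wpM2l // ltW.
  have b1 : t * (x0 - x) <= 1.
    by rewrite -(mulfV (lt0r_neq0 t0)) ler_wpM2l // ltW.
  pose Ex := expR (t * x - M).
  have Ex0 : 0 < Ex by exact: expR_gt0.
  have E1 : expR (y * t) <= Ex / 2.
    have : y * t <= (t * x - M) + (-1).
      rewrite /y; move: a1 b1 td; rewrite mulrBr mulrBl; lra.
    rewrite -ler_expR expRD => h; apply: le_trans h _.
    rewrite -/Ex; nra.
  have E2 : expR (x0 * t) * p <= Ex / 2.
    have h1 : expR (x0 * t) * p <= expR (x0 * t) * eps.
      by rewrite ler_wpM2l ?expR_ge0 // ltW.
    have h2 : expR (x0 * t) * expR (- (M + 1)) <= Ex.
      rewrite -expRD ler_expR; move: b1; rewrite mulrBr; lra.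
    move: h1; rewrite /eps mulrA; lra.
  have hB : m <= Ex.
    move: mb; rewrite mE lee_fin => mb; apply: le_trans mb _; rewrite -/p; lra.
  rewrite -[X in _ <= X](expRK (t * x - M)) ler_ln // ?posrE ?expR_gt0 //.
- apply/cvgeyPge => A.
  pose t := r / 2.
  have t0 : 0 < t by rewrite divr_gt0.
  have ht : (mgf mu t < +oo)%E by apply: hr; apply/andP; split; rewrite /t; lra.
  pose m := fine (mgf mu t).
  have mE : mgf mu t = m%:E by rewrite /m fineK // (ge0_fin_numE (@mgf_ge0 _ mu t)).
  have LE : Lambda mu t = (ln m)%:E by rewrite /Lambda mE.
  near=> x.
  have hx : (A + ln m) / t <= x by near: x; apply: nbhs_pinfty_ge; exact: num_real.
  apply: le_trans (@Lstar_ge _ mu t x).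
  rewrite LE -EFinB lee_fin.
  have : A + ln m <= x * t by rewrite -ler_pdivrMr.
  rewrite mulrC; lra.
Unshelve. all: by end_near.
Qed.
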